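(* Fix constants $\gamma\in(0,1]$, $c_1>0$, $K\ge1$, $K'\ge1$. There exists $L_0$ depending only on these constants such that the following holds for every $L\ge L_0$. Let $d_0,\dots,d_L$ be positive integers, $X\in\mathbb{R}^{d_0\times n}$, $Y\in\mathbb{R}^{d_L\times n}$ with $K^{-1}\le\|X\|_F\le K$ and $K^{-1}\le\|Y\|_F\le K$, and let $\alpha>0$, $\sigma_1,\dots,\sigma_L>0$ satisfy $\beta:=\alpha\prod_{i=1}^L(\sqrt{d_i}\sigma_i)\le L^K$. Let $\ell(W_1,\dots,W_L)=\frac12\|\alpha W_L\cdots W_1X-Y\|_F^2$ for $W_i\in\mathbb{R}^{d_i\times d_{i-1}}$. Suppose matrices $W_1,\dots,W_L$ are such that $A_i=W_i/(\sqrt{d_i}\sigma_i)$ satisfy $\|A_{j:i}\|\le K'L^3$ for all $1\le i\le j\le L$ and $\|A_{j:i}\|\le K'e^{-c_1L^\gamma}$ for all $1\le i\le j\le L$ with $j-i\ge L/4$, where $A_{j:i}=A_j\cdots A_i$ and $A_{i-1:i}=I$. Then $$0.4\|Y\|_F^2<\ell(W_1,\dots,W_L)<0.6\|Y\|_F^2,\qquad \|\nabla_{W_i}\ell(W_1,\dots,W_L)\|\le(\sqrt{d_i}\sigma_i)^{-1}e^{-0.9c_1L^\gamma}\ \ \forall i\in[L].$$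
   Context: $\|\cdot\|$ is the spectral norm, $\|\cdot\|_F$ the Frobenius norm; $[L]=\{1,\dots,L\}$. *)

(* Defs.v *)
From HB Require Import structures.
From mathcomp Require Import all_boot all_order all_algebra.
From mathcomp Require Import all_classical all_reals all_analysis.
Set Implicit Arguments. Unset Strict Implicit. Unset Printing Implicit Defensive.
Import Order.TTheory GRing.Theory Num.Theory.
Local Open Scope ring_scope.
Local Open Scope classical_set_scope.

Definition frob (R : realType) (m n : nat) (A : 'M[R]_(m, n)) : R :=
  Num.sqrt (\sum_(i < m) \sum_(j < n) A i j ^+ 2).

Definition specnorm (R : realType) (m n : nat) (A : 'M[R]_(m, n)) : R :=
  sup [set frob (A *m v) | v in [set v : 'cV[R]_n | frob v <= 1]].

(* mprod d M i j = M_j * ... * M_i : 'M_(d j, d (i-1)) for 1 <= i <= j;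
   for j = i - 1 it is the identity (conform_mx returns 1%:M since the
   dimensions agree). *)
Fixpoint mprod (R : realType) (d : nat -> nat)
  (M : forall k : nat, 'M[R]_(d k, d k.-1)) (i j : nat) : 'M[R]_(d j, d i.-1) :=
  match j with
  | 0 => conform_mx 0 (1%:M : 'M[R]_(d 0))
  | j'.+1 => if (i <= j'.+1)%N then M j'.+1 *m mprod M i j'
             else conform_mx 0 (1%:M : 'M[R]_(d j'.+1))
  end.

Definition normalized (R : realType) (d : nat -> nat) (sigma : nat -> R)
  (W : forall k : nat, 'M[R]_(d k, d k.-1)) : forall k : nat, 'M[R]_(d k, d k.-1) :=
  fun k => (Num.sqrt (d k)%:R * sigma k)^-1 *: W k.

Definition loss (R : realType) (d : nat -> nat) (n L : nat) (alpha : R)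
  (X : 'M[R]_(d 0, n)) (Y : 'M[R]_(d L, n))
  (W : forall k : nat, 'M[R]_(d k, d k.-1)) : R :=
  2^-1 * frob (alpha *: (mprod W 1 L *m X) - Y) ^+ 2.

Definition perturb (R : realType) (d : nat -> nat)
  (W : forall k : nat, 'M[R]_(d k, d k.-1)) (i : nat) (E : 'M[R]_(d i, d i.-1))
  (t : R) : forall k : nat, 'M[R]_(d k, d k.-1) :=
  fun k => W k + (if k == i then t *: conform_mx 0 E else 0).

Definition grad_loss (R : realType) (d : nat -> nat) (n L : nat) (alpha : R)
  (X : 'M[R]_(d 0, n)) (Y : 'M[R]_(d L, n))
  (W : forall k : nat, 'M[R]_(d k, d k.-1)) (i : nat) : 'M[R]_(d i, d i.-1) :=
  \matrix_(a, b)
    derive1 (fun t : R => loss alpha X Y (@perturb R d W i (delta_mx a b) t)) 0.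

(* Main.v *)
Require Import Defs.
From HB Require Import structures.
From mathcomp Require Import all_boot all_order all_algebra.
From mathcomp Require Import all_classical all_reals all_analysis.
From mathcomp Require Import ring lra zify.
Import Order.TTheory GRing.Theory Num.Theory.
Set Implicit Arguments. Unset Strict Implicit. Unset Printing Implicit Defensive.
Local Open Scope ring_scope.
Local Open Scope classical_set_scope.

Section LA.
Variable R : realType.

Definition dotm (m n : nat) (M N : 'M[R]_(m, n)) : R :=
  \sum_(i < m) \sum_(j < n) M i j * N i j.

Lemma dotmC m n (M N : 'M[R]_(m, n)) : dotm M N = dotm N M.
Proof. by apply: eq_bigr => i _; apply: eq_bigr => j _; rewrite mulrC. Qed.

Lemma dotmDl m n (M N P : 'M[R]_(m, n)) : dotm (M + N) P = dotm M P + dotm N P.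
Proof.
rewrite /dotm -big_split /=; apply: eq_bigr => i _.
rewrite -big_split /=; apply: eq_bigr => j _; by rewrite !mxE mulrDl.
Qed.

Lemma dotmZl m n (c : R) (M P : 'M[R]_(m, n)) : dotm (c *: M) P = c * dotm M P.
Proof.
rewrite /dotm mulr_sumr; apply: eq_bigr => i _.
rewrite mulr_sumr; apply: eq_bigr => j _; by rewrite !mxE mulrA.
Qed.

Lemma dotmNl m n (M P : 'M[R]_(m, n)) : dotm (- M) P = - dotm M P.
Proof. by rewrite -scaleN1r dotmZl mulN1r. Qed.

Lemma dotm_ge0 m n (M : 'M[R]_(m, n)) : 0 <= dotm M M.
Proof. by apply: sumr_ge0 => i _; apply: sumr_ge0 => j _; rewrite -expr2 sqr_ge0. Qed.

Lemma dotm_eq0 m n (M : 'M[R]_(m, n)) : dotm M M = 0 -> M = 0.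
Proof.
move=> H; apply/matrixP => i j; rewrite mxE.
have : \sum_(j < n) M i j * M i j = 0.
  apply: (psumr_eq0P _ H) => // k _; apply: sumr_ge0 => l _; by rewrite -expr2 sqr_ge0.
move=> H2.
have : M i j * M i j = 0.
  apply: (psumr_eq0P _ H2) => // k _; by rewrite -expr2 sqr_ge0.
by move/eqP; rewrite mulf_eq0 orbb => /eqP.
Qed.

Lemma dotmDr m n (M N P : 'M[R]_(m, n)) : dotm P (M + N) = dotm P M + dotm P N.
Proof. by rewrite dotmC dotmDl !(dotmC P). Qed.
Lemma dotmZr m n (c : R) (M P : 'M[R]_(m, n)) : dotm P (c *: M) = c * dotm P M.
Proof. by rewrite dotmC dotmZl dotmC. Qed.

Lemma dotm_lin2 m n (x y : R) (M N : 'M[R]_(m, n)) :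
  dotm (x *: M + y *: N) (x *: M + y *: N) =
  x ^+ 2 * dotm M M + 2 * x * y * dotm M N + y ^+ 2 * dotm N N.
Proof.
rewrite !dotmDl !dotmDr !dotmZl !dotmZr (dotmC N M); ring.
Qed.

Lemma dotm_exp m n (t : R) (M N : 'M[R]_(m, n)) :
  dotm (M + t *: N) (M + t *: N) = dotm M M + 2 * t * dotm M N + t ^+ 2 * dotm N N.
Proof. by have := dotm_lin2 1 t M N; rewrite scale1r => ->; rewrite expr1n mul1r mulr1. Qed.

Lemma dotm0r m n (M : 'M[R]_(m, n)) : dotm M 0 = 0.
Proof. by rewrite -(scale0r (0 : 'M[R]_(m,n))) dotmZr mul0r. Qed.

Lemma dotm_CS m n (M N : 'M[R]_(m, n)) : dotm M N ^+ 2 <= dotm M M * dotm N N.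
Proof.
have [a0|] := eqVneq (dotm N N) 0.
  by rewrite (dotm_eq0 a0) !dotm0r expr0n /= mulr0.
move=> an0.
have a_gt0 : 0 < dotm N N by rewrite lt_def an0 dotm_ge0.
have := dotm_ge0 (dotm N N *: M + (- dotm M N) *: N).
rewrite dotm_lin2 => H.
have : 0 <= dotm N N * (dotm M M * dotm N N - dotm M N ^+ 2) by nra.
by rewrite pmulr_rge0 // subr_ge0.
Qed.

Lemma frobE m n (M : 'M[R]_(m, n)) : frob M = Num.sqrt (dotm M M).
Proof.
rewrite /frob /dotm; congr Num.sqrt; apply: eq_bigr => i _; apply: eq_bigr => j _.
Qed.

Lemma frob_ge0 m n (M : 'M[R]_(m, n)) : 0 <= frob M.
Proof. by rewrite frobE sqrtr_ge0. Qed.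

Lemma frob_sqr m n (M : 'M[R]_(m, n)) : frob M ^+ 2 = dotm M M.
Proof. by rewrite frobE sqr_sqrtr // dotm_ge0. Qed.

Lemma dotm_le m n (M N : 'M[R]_(m, n)) : dotm M N <= frob M * frob N.
Proof.
have := dotm_CS M N; rewrite -!frob_sqr => H.
have h1 := frob_ge0 M; have h2 := frob_ge0 N.
have h3 := mulr_ge0 h1 h2.
have [//|lt] := lerP (dotm M N) (frob M * frob N).
have : (frob M * frob N) ^+ 2 < dotm M N ^+ 2.
  by rewrite ltr_pXn2r // ?nnegrE // (le_trans h3 (ltW lt)).
by rewrite exprMn ltNge H.
Qed.

Lemma frobZ m n (c : R) (M : 'M[R]_(m, n)) : frob (c *: M) = `|c| * frob M.
Proof.
by rewrite !frobE dotmZl dotmZr mulrA -expr2 sqrtrM ?sqr_ge0 // sqrtr_sqr.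
Qed.

Lemma frobN m n (M : 'M[R]_(m, n)) : frob (- M) = frob M.
Proof. by rewrite -scaleN1r frobZ normrN normr1 mul1r. Qed.

Lemma frobD m n (M N : 'M[R]_(m, n)) : frob (M + N) <= frob M + frob N.
Proof.
have h1 := frob_ge0 M; have h2 := frob_ge0 N; have h3 := frob_ge0 (M + N).
have : frob (M + N) ^+ 2 <= (frob M + frob N) ^+ 2.
  rewrite frob_sqr dotmDl !dotmDr (dotmC N M) sqrrD -!frob_sqr.
  have := dotm_le M N; nra.
nra.
Qed.

Lemma frobB m n (M N : 'M[R]_(m, n)) : frob (M - N) <= frob M + frob N.
Proof. by rewrite -(frobN N) frobD. Qed.

Lemma dotm_tr m n (M N : 'M[R]_(m, n)) : dotm M^T N^T = dotm M N.
Proof. by rewrite /dotm exchange_big; apply: eq_bigr => i _; apply: eq_bigr => j _; rewrite !mxE. Qed.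

Lemma frob_tr m n (M : 'M[R]_(m, n)) : frob M^T = frob M.
Proof. by rewrite !frobE dotm_tr. Qed.

Lemma dotm_trace m n (M N : 'M[R]_(m, n)) : dotm M N = \tr (M^T *m N).
Proof.
rewrite /dotm /mxtrace exchange_big; apply: eq_bigr => j _; rewrite mxE.
by apply: eq_bigr => i _; rewrite mxE.
Qed.

Lemma dotm_adj m n p (A : 'M[R]_(m, n)) (x : 'M[R]_(m, p)) (y : 'M[R]_(n, p)) :
  dotm (A^T *m x) y = dotm x (A *m y).
Proof. by rewrite !dotm_trace trmx_mul trmxK mulmxA. Qed.

Lemma frob_le_sq m n (M : 'M[R]_(m, n)) c : 0 <= c -> frob M ^+ 2 <= c ^+ 2 -> frob M <= c.
Proof. move=> c0 h; rewrite -(ger0_norm (frob_ge0 M)) -(ger0_norm c0) -!sqrtr_sqr ler_sqrt //; exact: sqr_ge0. Qed.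

Lemma frob0 m n : frob (0 : 'M[R]_(m, n)) = 0.
Proof. by rewrite frobE dotm0r sqrtr0. Qed.

Lemma frob_eq0 m n (M : 'M[R]_(m, n)) : frob M = 0 -> M = 0.
Proof. by move=> H; apply: dotm_eq0; rewrite -frob_sqr H expr0n. Qed.

Lemma frobM m n p (A : 'M[R]_(m, n)) (B : 'M[R]_(n, p)) :
  frob (A *m B) <= frob A * frob B.
Proof.
apply: frob_le_sq; first by rewrite mulr_ge0 ?frob_ge0.
rewrite exprMn !frob_sqr.
have E : forall i j, (A *m B) i j = dotm (row i A) (col j B)^T.
  move=> i j; rewrite /dotm big_ord1 mxE; apply: eq_bigr => k _; by rewrite !mxE.
have -> : dotm A A = \sum_(i < m) dotm (row i A) (row i A).
  apply: eq_bigr => i _; rewrite /dotm big_ord1; apply: eq_bigr => k _; by rewrite !mxE.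
have -> : dotm B B = \sum_(j < p) dotm (col j B)^T (col j B)^T.
  rewrite /dotm exchange_big; apply: eq_bigr => j _; rewrite big_ord1; apply: eq_bigr => k _; by rewrite !mxE.
rewrite mulr_suml; apply: ler_sum => i _; rewrite mulr_sumr; apply: ler_sum => j _.
by rewrite E -expr2 dotm_CS.
Qed.

Definition specset m n (A : 'M[R]_(m, n)) :=
  [set frob (A *m v) | v in [set v : 'cV[R]_n | frob v <= 1]].

Lemma specset_ub m n (A : 'M[R]_(m, n)) : has_ubound (specset A).
Proof.
exists (frob A); rewrite /specset => x [v hv <-].
apply: le_trans (frobM _ _) _.
by rewrite -{2}(mulr1 (frob A)) ler_wpM2l ?frob_ge0.
Qed.

Lemma specset0 m n (A : 'M[R]_(m, n)) : specset A 0.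
Proof. by rewrite /specset; exists 0; rewrite /= ?frob0 ?ler01 // mulmx0 frob0. Qed.

Lemma spec_ge0 m n (A : 'M[R]_(m, n)) : 0 <= specnorm A.
Proof. exact: (ub_le_sup (specset_ub A) (specset0 A)). Qed.

Lemma spec_vec m n (A : 'M[R]_(m, n)) (v : 'M[R]_(n, 1)) :
  frob (A *m v) <= specnorm A * frob v.
Proof.
have [v0|vn0] := eqVneq (frob v) 0.
  by rewrite (frob_eq0 v0) mulmx0 frob0 frob0 mulr0.
have vp : 0 < frob v by rewrite lt_def vn0 frob_ge0.
have H : specset A (frob (A *m ((frob v)^-1 *: v))).
  rewrite /specset; exists ((frob v)^-1 *: v) => //=.
  by rewrite frobZ ger0_norm ?invr_ge0 ?frob_ge0 // mulVf.
have := ub_le_sup (specset_ub A) H.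
rewrite -scalemxAr frobZ ger0_norm ?invr_ge0 ?frob_ge0 //.
by rewrite ler_pdivrMl // mulrC.
Qed.

Lemma spec_le m n (A : 'M[R]_(m, n)) c :
  (forall v : 'cV[R]_n, frob v <= 1 -> frob (A *m v) <= c) -> specnorm A <= c.
Proof.
move=> H; apply: ge_sup; first by exists 0; exact: specset0.
by rewrite /specset => x [v hv <-]; apply: H.
Qed.

Lemma spec_le_frob m n (A : 'M[R]_(m, n)) : specnorm A <= frob A.
Proof.
apply: spec_le => v hv; apply: le_trans (frobM _ _) _.
by rewrite -{2}(mulr1 (frob A)) ler_wpM2l ?frob_ge0.
Qed.

Lemma dotm_cols m n (M : 'M[R]_(m, n)) :
  dotm M M = \sum_(j < n) dotm (col j M) (col j M).
Proof.
rewrite /dotm exchange_big; apply: eq_bigr => j _.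
by apply: eq_bigr => i _; rewrite big_ord1 !mxE.
Qed.

Lemma spec_mul_frob m n p (A : 'M[R]_(m, n)) (M : 'M[R]_(n, p)) :
  frob (A *m M) <= specnorm A * frob M.
Proof.
apply: frob_le_sq; first by rewrite mulr_ge0 ?spec_ge0 ?frob_ge0.
rewrite exprMn !frob_sqr !(dotm_cols (_ *m _)) (dotm_cols M) mulr_sumr.
apply: ler_sum => j _; rewrite [col j (A *m M)]colE -mulmxA -colE -!frob_sqr -exprMn.
rewrite ler_sqr ?nnegrE ?frob_ge0 ?mulr_ge0 ?spec_ge0 ?frob_ge0 //.
exact: spec_vec.
Qed.

Lemma spec_tr m n (A : 'M[R]_(m, n)) : specnorm A^T <= specnorm A.
Proof.
apply: spec_le => v hv.
set y := A^T *m v.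
have H : frob y ^+ 2 <= frob v * (specnorm A * frob y).
  rewrite frob_sqr {1}/y dotm_adj; apply: le_trans (dotm_le _ _) _.
  by rewrite ler_wpM2l ?frob_ge0 // spec_vec.
have hy := frob_ge0 y; have hs := spec_ge0 A; have hv0 := frob_ge0 v.
have [y0|yn0] := eqVneq (frob y) 0; first by rewrite y0.
have yp : 0 < frob y by rewrite lt_def yn0 hy.
have : frob y <= frob v * specnorm A.
  by rewrite -(ler_pM2r yp) -mulrA -expr2.
move=> h; apply: le_trans h _; rewrite -{2}(mul1r (specnorm A)).
by rewrite ler_wpM2r.
Qed.

Lemma spec_scale m n (c : R) (A : 'M[R]_(m, n)) :
  0 <= c -> specnorm (c *: A) <= c * specnorm A.
Proof.
move=> c0; apply: spec_le => v hv.
rewrite -scalemxAl frobZ ger0_norm // ler_wpM2l //.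
apply: le_trans (spec_vec _ _) _.
by rewrite -{2}(mulr1 (specnorm A)) ler_wpM2l ?spec_ge0.
Qed.

Lemma spec_id n : specnorm (1%:M : 'M[R]_n) <= 1.
Proof. by apply: spec_le => v hv; rewrite mul1mx. Qed.
End LA.

Section MP.
Variable R : realType.
Variable d : nat -> nat.

Lemma mprodS (M : forall k, 'M[R]_(d k, d k.-1)) i j :
  (i <= j.+1)%N -> mprod M i j.+1 = M j.+1 *m mprod M i j.
Proof. by move=> h; rewrite /= h. Qed.

Lemma mprod_id (M : forall k, 'M[R]_(d k, d k.-1)) i : mprod M i.+1 i = 1%:M.
Proof. by case: i => [|i] /=; rewrite ?ltnn conform_mx_id. Qed.

Lemma mprod_scale (M N : forall k, 'M[R]_(d k, d k.-1)) (s : nat -> R) L :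
  (forall k, (1 <= k <= L)%N -> s k != 0) ->
  (forall k, N k = (s k)^-1 *: M k) ->
  forall i j, (1 <= i)%N -> (j <= L)%N -> (i <= j.+1)%N ->
  mprod M i j = (\prod_(i <= k < j.+1) s k) *: mprod N i j.
Proof.
move=> hs hN i j hi; elim: j => [|j IH] hj hij.
  by rewrite big_geq // scale1r.
case: (ltngtP i j.+2) hij => // [hlt|->] _.
  rewrite !mprodS // IH ?(ltnW hj) // [in RHS]big_nat_recr //= hN.
  rewrite -scalemxAr -scalemxAl scalerA; congr (_ *: _).
  rewrite -mulrA mulfV ?mulr1 //; apply: hs; by rewrite hj (leq_trans hi).
by rewrite !mprod_id big_geq // scale1r.
Qed.

Lemma pert_lo (W : forall k, 'M[R]_(d k, d k.-1)) i (E : 'M[R]_(d i.+1, d i)) t j :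
  (j <= i)%N -> mprod (perturb W E t) 1 j = mprod W 1 j.
Proof.
elim: j => [|j IH] hj //.
rewrite !mprodS // IH ?(ltnW hj) // /perturb.
have -> : (j.+1 == i.+1) = false by apply/negbTE; rewrite eqSS neq_ltn hj.
by rewrite addr0.
Qed.

Lemma pert_hi (W : forall k, 'M[R]_(d k, d k.-1)) i (E : 'M[R]_(d i.+1, d i)) t j :
  (i.+1 <= j)%N -> mprod (perturb W E t) 1 j =
    mprod W 1 j + t *: (mprod W i.+2 j *m E *m mprod W 1 i).
Proof.
elim: j => [|j IH] hj //.
move: hj; rewrite ltnS leq_eqVlt => /orP [/eqP <-|hlt]; last first.
  rewrite !mprodS // IH // /perturb.
  have -> : (j.+1 == i.+1) = false by apply/negbTE; rewrite eqSS neq_ltn hlt orbT.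
  rewrite addr0 mulmxDr -scalemxAr !mulmxA.
  by rewrite -(mprodS W (_ : (i.+2 <= j.+1)%N)).
rewrite mprod_id mul1mx !mprodS // pert_lo // /perturb eqxx conform_mx_id.
by rewrite mulmxDl -scalemxAl.
Qed.
End MP.

Lemma tr_delta (R : realType) m n (G : 'M[R]_(n, m)) (a : 'I_m) (b : 'I_n) :
  \tr (G *m delta_mx a b) = G b a.
Proof.
rewrite /mxtrace (bigD1 b) //= big1 => [|k kb].
- rewrite mxE (bigD1 a) //= big1 => [|l la]; first by rewrite !mxE !eqxx mulr1 !addr0.
  by rewrite mxE (negbTE la) mulr0.
- by rewrite mxE big1 // => l _; rewrite mxE (negbTE kb) andbF mulr0.
Qed.

Lemma dpoly (R : realType) (a b c : R) :
  derive1 (fun t : R => a + t * b + t ^+ 2 * c) 0 = b.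
Proof.
rewrite derive1E.
have H : is_derive (0:R) 1 (fun t : R => a + t * b + t ^+ 2 * c) b.
  apply: is_derive_eq.
  by rewrite add0r mul1r !scaler0 add0r !scale0r !addr0 scaler0 addr0 addr0 /GRing.scale /= mulr1.
exact: derive_val.
Qed.

Lemma grad_formula (R : realType) (d : nat -> nat) (n L : nat) (alpha : R)
  (X : 'M[R]_(d 0, n)) (Y : 'M[R]_(d L, n)) (W : forall k, 'M[R]_(d k, d k.-1)) i :
  (i.+1 <= L)%N ->
  grad_loss alpha X Y W i.+1 = alpha *: ((mprod W i.+2 L)^T *m
      (alpha *: (mprod W 1 L *m X) - Y) *m (mprod W 1 i *m X)^T).
Proof.
move=> hi; apply/matrixP => a b; rewrite mxE [RHS]mxE.
set Rm := alpha *: (mprod W 1 L *m X) - Y.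
set N := alpha *: (mprod W i.+2 L *m delta_mx a b *m mprod W 1 i *m X).
have -> : (fun t => loss alpha X Y (perturb W (delta_mx a b) t)) =
    (fun t => 2^-1 * dotm Rm Rm + t * dotm Rm N + t ^+ 2 * (2^-1 * dotm N N)).
  apply: funext => t; rewrite /loss pert_hi // frob_sqr.
  have -> : alpha *: ((mprod W 1 L + t *: (mprod W i.+2 L *m delta_mx a b *m mprod W 1 i)) *m X) - Y
     = Rm + t *: N.
    rewrite /Rm /N mulmxDl scalerDr -scalemxAl !scalerA mulrC -!scalerA.
    by rewrite addrAC.
  by rewrite dotm_exp; field; rewrite ?pnatr_eq0.
have -> : (mprod W i.+2 L)^T *m Rm *m (mprod W 1 i *m X)^T =
  ((mprod W 1 i *m X) *m Rm^T *m mprod W i.+2 L)^T by rewrite !trmx_mul trmxK mulmxA.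
rewrite [in RHS]mxE.
transitivity (dotm Rm N); first exact: dpoly.
rewrite /N dotmZr -mulmxA dotm_trace mxtrace_mulC !mulmxA.
by rewrite -!mulmxA mxtrace_mulC -mulmxA mxtrace_mulC tr_delta !mulmxA.
Qed.
Lemma asym (R : realType) (gamma b c : R) (p : nat) : 0 < gamma -> 0 < b -> 0 < c ->
  exists L0 : nat, forall L : nat, (L0 <= L)%N ->
    1 <= (L%:R : R) /\ L%:R ^+ p * expR (- (b * L%:R `^ gamma)) <= c.
Proof.
move=> g0 b0 c0.
set B := Num.Def.archi_bound ((p.+1)%:R / gamma).
set m := B.+1.
have hm : (p.+1)%:R <= gamma * m%:R.
  have h1 : (p.+1)%:R / gamma < B%:R.
    by apply: archi_boundP; rewrite divr_ge0 ?ler0n ?ltW.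
  have h2 : (B%:R : R) <= m%:R by rewrite ler_nat.
  have h3 : (p.+1)%:R / gamma * gamma = (p.+1)%:R :> R by rewrite divfK ?gt_eqF.
  nra.
set q := (m`!)%:R / b ^+ m.
have q0 : 0 < q by rewrite divr_gt0 ?exprn_gt0 // ltr0n fact_gt0.
exists (Num.Def.archi_bound (q / c)).+1 => L hL.
set x := (L%:R : R).
have hL0 : (0 < L)%N by apply: leq_trans hL.
have hx1 : 1 <= x by rewrite /x ler1n.
split => //.
have hxq : q / c < x.
  apply: lt_le_trans (archi_boundP _) _; first by rewrite divr_ge0 ?ltW.
  by rewrite /x ler_nat ltnW.
have y0 : 0 <= b * x `^ gamma by rewrite mulr_ge0 ?powR_ge0 // ltW.
have hE : b ^+ m * x ^+ p.+1 / (m`!)%:R <= expR (b * x `^ gamma).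
  have := expR_ge1Dxn B y0; rewrite -/m => h.
  apply: le_trans h; rewrite -[X in X <= _]add0r lerD // ler_wpM2r ?invr_ge0 ?ler0n //.
  rewrite exprMn ler_pM2l ?exprn_gt0 //.
  rewrite -(powR_mulrn m (powR_ge0 x gamma)) -powRrM -powR_mulrn; last first.
    by apply: le_trans hx1; exact: ler01.
  exact: ler_powR.
have Ep := expR_gt0 (b * x `^ gamma).
rewrite expRN ler_pdivrMr //.
have hx0 : 0 < x by apply: lt_le_trans hx1; exact: ltr01.
have hq : q <= c * x by rewrite mulrC -ler_pdivrMr // ltW.
apply: le_trans (_ : c * (b ^+ m * x ^+ p.+1 / (m`!)%:R) <= _); last first.
  by rewrite ler_pM2l.
have -> : c * (b ^+ m * x ^+ p.+1 / (m`!)%:R) = x ^+ p * (c * x / q).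
  rewrite /q exprS; field.
  by rewrite pnatr_eq0 -lt0n fact_gt0 andbT expf_neq0 // gt_eqF.
rewrite -{1}(mulr1 (x ^+ p)); apply: ler_wpM2l; first by rewrite exprn_ge0 ?ltW.
by rewrite ler_pdivlMr // mul1r.
Qed.

Lemma quarter (R : realType) (L k : nat) : ((L%:R / 4 : R) <= k%:R) = (L <= 4 * k)%N.
Proof. by rewrite ler_pdivrMr ?ltr0n // -natrM ler_nat mulnC. Qed.

Lemma nat1 L : (6 <= L)%N -> (L <= 4 * (L - 1))%N.
Proof. lia. Qed.
Lemma nat2 L i : (6 <= L)%N -> (L <= 4 * (L - i.+2))%N -> (i.+2 <= L)%N.
Proof. lia. Qed.
Lemma nat3 L i : (6 <= L)%N -> (i.+1 <= L)%N -> ~~ (L <= 4 * (L - i.+2))%N -> (1 <= i)%N.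
Proof. lia. Qed.
Lemma nat4 L i : (6 <= L)%N -> (i.+1 <= L)%N -> ~~ (L <= 4 * (L - i.+2))%N -> (L <= 4 * (i - 1))%N.
Proof. lia. Qed.

Lemma loss_arith (R : realType) (z y w : R) : 0 <= z -> 0 < y -> 11 * z <= y ->
  w <= z * y -> - w <= z * y ->
  4 / 10 * y ^+ 2 < 2^-1 * (z ^+ 2 + 2 * -1 * w + (-1) ^+ 2 * y ^+ 2) < 6 / 10 * y ^+ 2.
Proof.
move=> z0 y0 h hw hw'.
have h1 : 11 * (z * y) <= y * y by rewrite mulrA ler_wpM2r // ltW.
have h3 : 11 * (z * z) <= z * y by rewrite mulrA [z * y]mulrC ler_wpM2r.
have h2 : 0 < y * y by rewrite mulr_gt0.
have h4 : 0 <= z * z by rewrite mulr_ge0.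
have h5 : 0 <= z * y by rewrite mulr_ge0 // ltW.
rewrite !expr2; apply/andP; split; lra.
Qed.

Lemma prod_split (R : comRingType) (s : nat -> R) i L : (i.+1 <= L)%N ->
  \prod_(1 <= k < L.+1) s k = (\prod_(1 <= k < i.+1) s k) * (s i.+1 * \prod_(i.+2 <= k < L.+1) s k).
Proof.
move=> h; rewrite (@big_cat_nat _ _ _ i.+1) //=; last by rewrite ltnW.
by rewrite (@big_ltn _ _ _ i.+1).
Qed.

Lemma ar1 (R : comRingType) (a b c d : R) : a * b * c * d = a * (c * (d * b)).
Proof. ring. Qed.
Lemma ar2 (R : comRingType) (a b c d e k : R) :
  a * ((b * c) * ((d * e) * (k * (2 * k)))) = (a * b * d) * (c * e) * (2 * k ^+ 2).
Proof. ring. Qed.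
Lemma ar3 (R : comRingType) (x si k' l3 e k : R) :
  x * si * (k' * l3 * (k' * e)) * (2 * k ^+ 2) = si * ((x * l3 * e) * (2 * k ^+ 2 * k' ^+ 2)).
Proof. ring. Qed.
Lemma ar4 (R : realFieldType) (k k' e9 : R) : 0 < k -> 0 < k' ->
  (11 * k ^+ 2 * k' ^+ 2)^-1 * e9 * (2 * k ^+ 2 * k' ^+ 2) = e9 * (2 / 11).
Proof. by move=> h h'; field; rewrite !gt_eqF. Qed.

Theorem lemma5p4 (R : realType) (gamma c1 K K' : R) :
  0 < gamma <= 1 -> 0 < c1 -> 1 <= K -> 1 <= K' ->
  exists L0 : nat, forall L : nat, (L0 <= L)%N ->
  forall (d : nat -> nat) (n : nat), (forall i, (i <= L)%N -> (0 < d i)%N) ->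
  forall (X : 'M[R]_(d 0, n)) (Y : 'M[R]_(d L, n)),
  K^-1 <= frob X <= K -> K^-1 <= frob Y <= K ->
  forall (alpha : R) (sigma : nat -> R),
  0 < alpha -> (forall i, (1 <= i <= L)%N -> 0 < sigma i) ->
  alpha * \prod_(1 <= i < L.+1) (Num.sqrt (d i)%:R * sigma i) <= L%:R `^ K ->
  forall W : forall k : nat, 'M[R]_(d k, d k.-1),
  (forall i j, (1 <= i)%N -> (i <= j)%N -> (j <= L)%N ->
     specnorm (mprod (normalized sigma W) i j) <= K' * L%:R ^+ 3) ->
  (forall i j, (1 <= i)%N -> (i <= j)%N -> (j <= L)%N -> (L%:R / 4 : R) <= (j - i)%:R ->
     specnorm (mprod (normalized sigma W) i j) <= K' * expR (- (c1 * L%:R `^ gamma))) ->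
  (4 / 10 * frob Y ^+ 2 < loss alpha X Y W < 6 / 10 * frob Y ^+ 2) /\
  (forall i, (1 <= i <= L)%N ->
     specnorm (grad_loss alpha X Y W i)
       <= (Num.sqrt (d i)%:R * sigma i)^-1 * expR (- (9 / 10 * c1 * L%:R `^ gamma))).
Proof.
move=> /andP [g0 g1] c10 K1 K'1.
have K0 : 0 < K by apply: lt_le_trans K1; exact: ltr01.
have K'0 : 0 < K' by apply: lt_le_trans K'1; exact: ltr01.
set P := Num.Def.archi_bound K.
have hP : K < P%:R by apply: archi_boundP; exact: ltW.
have cpos : 0 < (11 * K ^+ 2 * K' ^+ 2)^-1.
  by rewrite invr_gt0 !mulr_gt0 ?exprn_gt0 // ltr0n.
have c10' : 0 < c1 / 10 by rewrite divr_gt0 ?ltr0n.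
have [L1 HL1] := asym (P + 3) g0 c10' cpos.
exists (maxn L1 6) => L hL d n hd X Y /andP [X1 X2] /andP [Y1 Y2] alpha sigma a0 hsig hbeta W hA1 hA2.
have [hLr hT] := HL1 L (leq_trans (leq_maxl _ _) hL).
have hL6 : (6 <= L)%N := leq_trans (leq_maxr _ _) hL.
set Lr := (L%:R : R) in hLr hT hbeta hA1 hA2 *.
set e := expR (- (c1 * Lr `^ gamma)) in hA2 *.
set e9 := expR (- (9 / 10 * c1 * Lr `^ gamma)).
set e1 := expR (- (c1 / 10 * Lr `^ gamma)) in hT.
have He : e = e9 * e1.
  by rewrite /e /e9 /e1 -expRD; congr expR; field.
have e9le1 : e9 <= 1 by rewrite /e9 expR_le1 oppr_le0 !mulr_ge0 ?powR_ge0 // ?ltW // divr_ge0 ?ler0n.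
have a0w := ltW a0; have K0w := ltW K0; have K'0w := ltW K'0.
have Lr0 : 0 <= Lr by apply: le_trans hLr; exact: ler01.
have hLK : Lr `^ K <= Lr ^+ P.
  by rewrite -powR_mulrn // ler_powR // ltW.
have e10 : 0 <= e1 by rewrite /e1 ltW ?expR_gt0.
have e90 : 0 <= e9 by rewrite /e9 ltW ?expR_gt0.
have hLK0 : 0 <= Lr `^ K by exact: powR_ge0.
have hL3 : 1 <= Lr ^+ 3 by rewrite exprn_ege1.
have hkey : Lr `^ K * Lr ^+ 3 * e <= (Lr ^+ (P + 3) * e1) * e9.
  have h := mulr_ge0 (mulr_ge0 (exprn_ge0 3 Lr0) e90) e10.
  rewrite He exprD; nra.
have heps1 : Lr `^ K * e <= Lr ^+ (P + 3) * e1.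
  apply: le_trans (_ : Lr `^ K * Lr ^+ 3 * e <= _); last first.
    apply: le_trans hkey _; have := mulr_ge0 (exprn_ge0 (P + 3) Lr0) e10; nra.
  have h : 0 <= e by rewrite He mulr_ge0.
  have := mulr_ge0 hLK0 h; nra.
set s := fun k => Num.sqrt (d k)%:R * sigma k.
set A := normalized sigma W.
have hs : forall k, (1 <= k <= L)%N -> 0 < s k.
  move=> k hk; rewrite /s mulr_gt0 ?hsig // sqrtr_gt0 ltr0n hd //.
  by case/andP: hk.
have hprod0 : forall i j, (1 <= i)%N -> (j <= L)%N -> 0 <= \prod_(i <= k < j.+1) s k.
  move=> i j hi hj; rewrite big_nat_cond; apply: prodr_ge0 => k /andP [/andP [h1 h2] _].
  by apply: ltW; apply: hs; rewrite (leq_trans hi h1) /= -ltnS (leq_trans h2).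
have hscale := @mprod_scale R d W A s L (fun k hk => lt0r_neq0 (hs k hk)) (fun k => erefl).
have specW : forall i j, (1 <= i)%N -> (j <= L)%N -> (i <= j.+1)%N ->
    specnorm (mprod W i j) <= (\prod_(i <= k < j.+1) s k) * specnorm (mprod A i j).
  by move=> i j hi hj hij; rewrite hscale //; apply: spec_scale; apply: hprod0.
have specA : forall i j, (1 <= i)%N -> (i <= j.+1)%N -> (j <= L)%N ->
    specnorm (mprod A i j) <= K' * Lr ^+ 3.
  move=> i j hi hij hj; case: (ltngtP i j.+1) hij => // [hlt|->] _; first by apply: hA1.
  rewrite mprod_id; apply: le_trans (spec_id _ _) _.
  by have := mulr_ge0 (ltW K'0) (ler0n R 0); nra.
set Z := alpha *: (mprod W 1 L *m X).
set eps := Lr `^ K * (K' * e) * K.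
have hbeta' : alpha * \prod_(1 <= k < L.+1) s k <= Lr `^ K by [].
have e0 : 0 <= e by rewrite He mulr_ge0.
have hZ : frob Z <= eps.
  rewrite /Z frobZ ger0_norm //.
  have h1 := specW 1%N L erefl (leqnn L) (ltn0Sn L).
  have h2 : specnorm (mprod A 1 L) <= K' * e.
    apply: hA2 => //; first by apply: leq_trans hL6.
    by rewrite quarter; apply: nat1.
  have h3 := hprod0 1%N L erefl (leqnn L).
  have h4 := spec_ge0 (mprod A 1 L).
  have h5 := spec_ge0 (mprod W 1 L).
  have h6 := frob_ge0 X.
  have h7 : specnorm (mprod W 1 L) <= \prod_(1 <= k < L.+1) s k * (K' * e).
    by apply: le_trans h1 _; apply: ler_wpM2l.
  have h8 : alpha * specnorm (mprod W 1 L) <= Lr `^ K * (K' * e).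
    apply: le_trans (_ : _ <= alpha * \prod_(1 <= k < L.+1) s k * (K' * e)) _.
      by rewrite -mulrA; apply: ler_wpM2l.
    by apply: ler_wpM2r => //; rewrite mulr_ge0.
  apply: le_trans (_ : _ <= alpha * (specnorm (mprod W 1 L) * frob X)) _.
    by apply: ler_wpM2l => //; exact: spec_mul_frob.
  rewrite mulrA /eps; apply: le_trans (_ : _ <= alpha * specnorm (mprod W 1 L) * K) _.
    by apply: ler_wpM2l => //; rewrite mulr_ge0.
  by apply: ler_wpM2r.
have heps : eps <= (11 * K)^-1.
  have h : eps <= Lr ^+ (P + 3) * e1 * (K' * K).
    have -> : eps = Lr `^ K * e * (K' * K) by rewrite /eps; ring.
    by apply: ler_wpM2r => //; rewrite mulr_ge0.
  apply: le_trans h _.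
  apply: le_trans (_ : _ <= (11 * K ^+ 2 * K' ^+ 2)^-1 * (K' * K)) _.
    by apply: ler_wpM2r => //; rewrite mulr_ge0.
  have -> : (11 * K ^+ 2 * K' ^+ 2)^-1 * (K' * K) = (11 * K)^-1 * K'^-1.
    by field; rewrite !gt_eqF.
  rewrite -[X in _ <= X](mulr1 (11 * K)^-1).
  apply: ler_wpM2l; first by rewrite invr_ge0 mulr_ge0 // ler0n.
  by rewrite invr_le1 // unitfE gt_eqF.
have hY0 : 0 < frob Y by apply: lt_le_trans Y1; rewrite invr_gt0.
have hZ0 := frob_ge0 Z.
have hz11 : 11 * frob Z <= frob Y.
  apply: le_trans Y1.
  have -> : K^-1 = 11 * (11 * K)^-1 by field; rewrite gt_eqF.
  apply: ler_wpM2l; [by rewrite ler0n | exact: le_trans hZ heps].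
split.
  have hw := dotm_le Z Y.
  have hw' := dotm_le (- Z) Y; rewrite dotmNl frobN in hw'.
  rewrite /loss -/Z -(scaleN1r Y) [frob (Z + _) ^+ 2]frob_sqr dotm_exp -!frob_sqr.
  exact: loss_arith.
case=> // i /andP [_ hiL].
rewrite grad_formula // -/Z.
set B := mprod W i.+2 L; set C := mprod W 1 i.
set aB := specnorm (mprod A i.+2 L); set aC := specnorm (mprod A 1 i).
set pB := \prod_(i.+2 <= k < L.+1) s k; set pC := \prod_(1 <= k < i.+1) s k.
have aB0 : 0 <= aB := spec_ge0 _.
have aC0 : 0 <= aC := spec_ge0 _.
have pB0 : 0 <= pB := hprod0 i.+2 L erefl (leqnn L).
have pC0 : 0 <= pC := hprod0 1%N i erefl (ltnW hiL).
have hB : specnorm B <= pB * aB := specW i.+2 L erefl (leqnn L) hiL.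
have hC : specnorm C <= pC * aC := specW 1%N i erefl (ltnW hiL) (ltn0Sn i).
have hsi : 0 < s i.+1 by apply: hs; rewrite hiL.
have hprod : alpha * pB * pC <= Lr `^ K / s i.+1.
  rewrite ler_pdivlMr //; apply: le_trans _ hbeta'.
  by rewrite (@prod_split _ s i L hiL) -/pB -/pC ar1.
have haBC : aB * aC <= (K' * Lr ^+ 3) * (K' * e).
  have [hq|hq] := boolP (L <= 4 * (L - i.+2))%N.
    have hiL2 : (i.+2 <= L)%N by apply: nat2 hq.
    rewrite mulrC; apply: ler_pM => //.
      by apply: specA => //; exact: ltnW.
    by apply: hA2 => //; rewrite quarter.
  have hi1 : (1 <= i)%N by apply: nat3 hq.
  apply: ler_pM => //; first by apply: specA.
  by apply: hA2 => //; [exact: ltnW | rewrite quarter; apply: nat4 hq].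
have hR : frob (alpha *: (mprod W 1 L *m X) - Y) <= 2 * K.
  apply: le_trans (frobB _ _) _; rewrite -/Z.
  have h : eps <= K.
    apply: le_trans heps _; apply: (@le_trans _ _ 1); last exact: K1.
    rewrite invr_le1 ?unitfE ?gt_eqF ?mulr_gt0 ?ltr0n //.
    by apply: (@le_trans _ _ K) => //; rewrite ler_peMl // ler1n.
  apply: le_trans (lerD (le_trans hZ h) Y2) _.
  by rewrite mulrDl mul1r.
set Rm := alpha *: (mprod W 1 L *m X) - Y in hR *.
have hX0 := frob_ge0 X.
have hR0 := frob_ge0 Rm.
have sB0 := spec_ge0 B.
have sC0 := spec_ge0 C.
have f2 : frob (Rm *m (C *m X)^T) <= specnorm C * (frob X * frob Rm).
  rewrite -frob_tr trmx_mul trmxK -mulmxA.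
  apply: le_trans (spec_mul_frob _ _) _; apply: ler_wpM2l => //.
  by apply: le_trans (frobM _ _) _; rewrite frob_tr.
have f1 : frob (B^T *m Rm *m (C *m X)^T) <= specnorm B * (specnorm C * (frob X * frob Rm)).
  rewrite -mulmxA; apply: le_trans (spec_mul_frob _ _) _.
  apply: ler_pM => //; [exact: spec_ge0 | exact: frob_ge0 | exact: spec_tr].
apply: le_trans (spec_le_frob _) _.
rewrite frobZ ger0_norm //.
apply: le_trans (_ : _ <= alpha * ((pB * aB) * ((pC * aC) * (K * (2 * K))))) _.
  apply: ler_wpM2l => //; apply: le_trans f1 _.
  apply: ler_pM => //; first by rewrite mulr_ge0 // mulr_ge0.
  apply: ler_pM => //; first by rewrite mulr_ge0.
  by apply: ler_pM.
rewrite ar2.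
apply: le_trans (_ : _ <= (Lr `^ K / s i.+1) * ((K' * Lr ^+ 3) * (K' * e)) * (2 * K ^+ 2)) _.
  apply: ler_wpM2r; first by rewrite mulr_ge0 ?ler0n ?exprn_ge0.
  apply: ler_pM => //; by rewrite !mulr_ge0.
rewrite ar3.
apply: ler_wpM2l; first by rewrite invr_ge0 ltW.
have hc0 : 0 <= 2 * K ^+ 2 * K' ^+ 2 by rewrite !mulr_ge0 ?ler0n ?exprn_ge0.
apply: le_trans (_ : _ <= (Lr ^+ (P + 3) * e1 * e9) * (2 * K ^+ 2 * K' ^+ 2)) _.
  by apply: ler_wpM2r.
apply: le_trans (_ : _ <= ((11 * K ^+ 2 * K' ^+ 2)^-1 * e9) * (2 * K ^+ 2 * K' ^+ 2)) _.
  by apply: ler_wpM2r => //; apply: ler_wpM2r.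
rewrite ar4 //.
rewrite -[X in _ <= X]mulr1; apply: ler_wpM2l => //.
by rewrite ler_pdivrMr ?ltr0n // mul1r ler_nat.
Qed.
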